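(* Let $r\geqslant 2$, $n\geqslant 2r-1$, and let $\pi,\sigma\in\mathrm{Sym}_n$ with $w_H(\pi)=2r-1$ and $w_H(\sigma)=r$. Then $\sigma\in N_3(\pi)$ if and only if the following holds. There is exactly one non-trivial cycle of $\sigma$ which is not a cycle of $\pi$, all other non-trivial cycles of $\sigma$ being cycles of $\pi$. This exceptional cycle can be written as $(y_1\,\ldots\,y_t)$ with $t\geqslant 2$ in such a way that $\pi$ has a cycle $(y_1\,\ldots\,y_t\,y_{t+1}\,\ldots\,y_{t+s})$ for some $s\geqslant 1$.
   Context: $\mathrm{Sym}_n$ is the symmetric group on $[n]$, and $w_H(\pi)=|\{i:\pi(i)\neq i\}|$. $Tc(\pi)=\{(i,\pi(i)):\pi(i)\neq i\}$. For $\pi$ with $w_H(\pi)=2r-1$, $N_3(\pi)=\{\sigma\in\mathrm{Sym}_n:|Tc(\sigma)\cap Tc(\pi)|=r-1,\ |Tc(\sigma)|=r\}$. *)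

(* Defs.v *)
From mathcomp Require Import all_boot all_fingroup.
Set Implicit Arguments. Unset Strict Implicit. Unset Printing Implicit Defensive.

(* Sym_n = {perm 'I_n}; points are 0..n-1 instead of 1..n. *)

Definition wH n (p : {perm 'I_n}) : nat := #|[set i | p i != i]|.

Definition Tc n (p : {perm 'I_n}) : {set 'I_n * 'I_n} :=
  [set ij | (ij.2 == p ij.1) && (p ij.1 != ij.1)].

(* N_3(p) for w_H(p) = 2r-1. *)
Definition N3 n (r : nat) (p : {perm 'I_n}) : {set {perm 'I_n}} :=
  [set s | (#|Tc s :&: Tc p| == r.-1) && (#|Tc s| == r)].

(* The cycle of s with support C (an orbit of s) is also a cycle of p:
   p acts on C exactly as s does. *)
Definition cycle_of n (s p : {perm 'I_n}) (C : {set 'I_n}) : Prop :=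
  forall x, x \in C -> p x = s x.

(* For y = [y_0; ...; y_(k-1)] with m <= k: q acts as the cycle
   (y_0 ... y_(m-1)), i.e. q y_i = y_(i+1) for i < m-1 and q y_(m-1) = y_0.
   (d is an irrelevant default, entries i < m <= size y are used.) *)
Definition is_cycle_seq n (q : {perm 'I_n}) (d : 'I_n) (y : seq 'I_n) (m : nat) : Prop :=
  forall i, i < m -> q (nth d y i) = nth d y (i.+1 %% m).

(* Main.v *)
Require Import Defs.
From mathcomp Require Import all_boot all_fingroup.
From mathcomp Require Import zify.
Set Implicit Arguments. Unset Strict Implicit. Unset Printing Implicit Defensive.

Section Aux.
Context {n : nat}.
Implicit Types (s p q : {perm 'I_n}).

Definition Dset s p := [set x | (s x != x) && (p x != s x)].

Lemma card_Tc s : #|Tc s| = wH s.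
Proof.
have -> : Tc s = [set (x, s x) | x in [set i | s i != i]].
  apply/setP => -[a b]; rewrite inE /=; apply/andP/imsetP.
  - by case=> /eqP -> h; exists a; rewrite ?inE.
  - by case=> x; rewrite inE => h [-> ->].
by rewrite card_imset // => x y [].
Qed.

Lemma card_TcI s p :
  #|Tc s :&: Tc p| = #|[set x | (s x != x) && (p x == s x)]|.
Proof.
have -> : Tc s :&: Tc p =
    [set (x, s x) | x in [set x | (s x != x) && (p x == s x)]].
  apply/setP => -[a b]; rewrite !inE /=; apply/idP/imsetP.
  - case/andP=> /andP[/eqP -> h1] /andP[/eqP h2 _]; exists a => //.
    by rewrite inE h1 -h2 eqxx.
  - case=> x; rewrite inE => /andP[h1 /eqP h2] [-> ->].
    by rewrite h2 eqxx h1.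
by rewrite card_imset // => x y [].
Qed.

Lemma wH_split s p :
  wH s = #|[set x | (s x != x) && (p x == s x)]| + #|Dset s p|.
Proof.
rewrite /wH -(cardsID [set x | p x == s x] [set i | s i != i]).
congr (_ + _); apply: eq_card => x; rewrite !inE //.
by rewrite andbC.
Qed.

Lemma N3_D r s p : 0 < r -> wH s = r ->
  (s \in N3 r p) <-> #|Dset s p| = 1.
Proof.
move=> r0 hw; rewrite inE card_TcI card_Tc hw eqxx andbT.
move: (wH_split s p); rewrite hw => e.
by split => [/eqP h | h]; [lia | apply/eqP; lia].
Qed.

Lemma porbit_fix s z : s z = z -> porbit s z = [set z].
Proof.
move=> h; apply/setP => y; rewrite inE; apply/porbitP/eqP => [[i ->]|->].
  by rewrite permX_fix.
by exists 0; rewrite expg0 perm1.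
Qed.

Lemma card_porbit_gt1 s z : s z != z -> 1 < #|porbit s z|.
Proof.
move=> h; have : [set z; s z] \subset porbit s z.
  apply/subsetP => y; rewrite !inE => /orP[]/eqP ->; first exact: porbit_id.
  by have := mem_porbit s 1 z; rewrite expg1.
by move/subset_leq_card; rewrite cards2 eq_sym h.
Qed.

Lemma in_porbit_nonfix s w z :
  z \in porbit s w -> 1 < #|porbit s w| -> s z != z.
Proof.
move=> hz hc; apply/eqP=> e.
have E : porbit s w = porbit s z by apply/eqP; rewrite eq_porbit_mem porbit_sym.
by rewrite E porbit_fix // cards1 in hc.
Qed.



Lemma iter_neq q y i : 0 < i < #|porbit q y| -> iter i q y != y.
Proof.
move=> /andP[i0 hi].
have U := uniq_traject_porbit q y.
have hi' : i < size (traject q y #|porbit q y|) by rewrite size_traject.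
have h0 : 0 < size (traject q y #|porbit q y|) by rewrite size_traject; lia.
have := nth_uniq y hi' h0 U.
rewrite !nth_traject //; last lia.
by move=> ->; rewrite -lt0n.
Qed.

Lemma iter_cyc q y i : i < #|porbit q y| ->
  q (iter i q y) = iter (i.+1 %% #|porbit q y|) q y.
Proof.
move=> hi; rewrite -iterS; case: (ltngtP i.+1 #|porbit q y|) => h.
- by rewrite modn_small.
- lia.
- by rewrite h modnn iter_porbit.
Qed.

End Aux.

Theorem lemma12 (r n : nat) (p s : {perm 'I_n}) :
  2 <= r -> 2 * r - 1 <= n ->
  wH p = 2 * r - 1 -> wH s = r ->
  (s \in N3 r p) <->
  (exists2 C : {set 'I_n}, C \in porbits s &
     [/\ 1 < #|C|, ~ cycle_of s p C,
         (forall C' : {set 'I_n}, C' \in porbits s -> 1 < #|C'| -> C' != C ->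
            cycle_of s p C') &
         exists (y : seq 'I_n) (d : 'I_n) (t u : nat),
           [/\ 2 <= t, 1 <= u, size y = t + u & uniq y] /\
           [/\ [set x in take t y] = C,
               is_cycle_seq s d y t & is_cycle_seq p d y (t + u)]]).
Proof.
move=> r2 _ _ hws; apply: (iff_trans (N3_D p (r:=r) _ hws)); first lia.
split.
- move/eqP/cards1P => [x0 hD].
  have inD x : (x \in Dset s p) = (x == x0) by rewrite hD inE.
  have hx0 : x0 \in Dset s p by rewrite inD.
  move: (hx0); rewrite inE => /andP[sx0 px0].
  have agree z : s z != z -> z != x0 -> p z = s z.
    move=> h1 h2; apply/eqP; move: h2; rewrite -inD inE h1 /=.
    by rewrite negbK.
  pose y1 := s x0.
  have Cy1 : porbit s y1 = porbit s x0.
    by have := porbit_perm s 1 x0; rewrite expg1.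
  pose t := #|porbit s y1|.
  have t2 : 1 < t by rewrite /t Cy1 card_porbit_gt1.
  have itx0 : iter t.-1 s y1 = x0.
    apply: (@perm_inj _ s); rewrite -iterS prednK; last lia.
    exact: iter_porbit.
  have neqx0 i : i < t.-1 -> iter i s y1 != x0.
    move=> hi; apply/eqP => e.
    have H := iter_neq (q:=s) (y:=y1) (i:=i.+1).
    rewrite iterS e eqxx in H.
    have : false by apply: H; rewrite -/t; lia.
    by [].
  have iterC i : iter i s y1 \in porbit s y1 by rewrite -permX mem_porbit.
  have agreeI i : i < t -> iter i p y1 = iter i s y1.
    elim: i => [//|i IH] hi.
    rewrite !iterS IH; last lia.
    apply: agree; first exact: (in_porbit_nonfix (iterC i)).
    apply: neqx0; lia.
  pose L := #|porbit p y1|.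
  have Lt : t < L.
    rewrite ltnNge; apply/negP => hL.
    have L0 : 0 < L by rewrite lt0n card_porbit_neq0.
    have iL := iter_porbit p y1; rewrite -/L in iL.
    case: (ltngtP L t) hL => // [hlt | heq] _.
    + rewrite agreeI // in iL.
      have H := iter_neq (q:=s) (y:=y1) (i:=L); rewrite iL eqxx in H.
      have : false by apply: H; rewrite -/t; lia.
      by [].
    + have tE : t = t.-1.+1 by lia.
      rewrite heq tE iterS agreeI ?itx0 in iL; last lia.
      by move: px0; rewrite iL eqxx.
  exists (porbit s x0); first by apply/imsetP; exists x0.
  split.
  + exact: card_porbit_gt1.
  + by move=> h; move: px0; rewrite h ?porbit_id // eqxx.
  + move=> C' /imsetP[z _ ->] hc hne x hx.
    apply: agree; first exact: (in_porbit_nonfix hx).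
    apply: contraNneq hne => ex.
    by rewrite eq_porbit_mem porbit_sym -ex.
  + exists (traject p y1 L), y1, t, (L - t).
    split; first split.
    * done.
    * lia.
    * rewrite size_traject; lia.
    * exact: uniq_traject_porbit.
    have trajE : take t (traject p y1 L) = traject s y1 t.
      apply: (@eq_from_nth _ y1).
        by rewrite size_takel ?size_traject //; lia.
      move=> i; rewrite size_takel ?size_traject; last lia.
      move=> hi; rewrite nth_take // !nth_traject // ?agreeI //; lia.
    split.
    * apply/setP => x; rewrite inE trajE -Cy1 porbit_traject //.
    * move=> i hi.
      have hm : i.+1 %% t < t by rewrite ltn_pmod //; lia.
      rewrite !nth_traject; [|lia|lia].
      by rewrite !agreeI // iter_cyc.
    * rewrite subnKC; last lia.
      move=> i hi.
      have hm : i.+1 %% L < L by rewrite ltn_pmod //; lia.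
      rewrite !nth_traject //.
      by rewrite iter_cyc.
- case=> C /imsetP[z _ hCz] [hC1 _ hoth [y [d [t [u [[t2 u1 sy uy] [hset hs hp]]]]]]].
  apply/eqP/cards1P; exists (nth d y t.-1).
  apply/setP => x; rewrite /Dset !inE; apply/idP/eqP.
  + move=> /andP[sx pxs].
    have xC : x \in C.
      have Cx : porbit s x \in porbits s by apply: imset_f.
      case: (eqVneq (porbit s x) C) => [<- | ne]; first exact: porbit_id.
      by rewrite (hoth _ Cx (card_porbit_gt1 sx) ne x (porbit_id s x)) eqxx in pxs.
    have st : size (take t y) = t by rewrite size_takel // sy; lia.
    move: xC; rewrite -hset inE => /(nthP d)[i]; rewrite st => hi ex; subst x.
    rewrite nth_take // in pxs *.
    case: (ltnP i t.-1) => hi2; last by congr nth; lia.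
    idtac.
    move: pxs; rewrite (hs i) /=; last lia. rewrite (hp i); last lia.
    rewrite !modn_small ?eqxx //; lia.
  + move=> ->.
    rewrite (hs t.-1) ?(hp t.-1); [|lia|lia].
    have e1 : t.-1.+1 = t by lia.
    rewrite e1 modnn (modn_small (m:=t)); last lia.
    rewrite !nth_uniq ?sy //; lia.
Qed.
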